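(* In the setting of the context, let $1\le i<j<k\le m$ be integers and $p',q,r$ integers such that $s_i^{p'}s_j^{q}s_k^{r}=e$ in $G_m$. Then $p'=q=r=0$.
   Context: $H$ is a finitely presented group with finite generating set $T$, containing a free subgroup $F$ of rank $p$ with free basis $\{d_1,\dots,d_p\}\subset T$ (standing assumption: $\mathrm{Dist}_F^H$ admits an exponentially bounded sequence of palindromic certificates in $F$). $F_x,F_y,F_z$ are free of rank $p$ with bases $\{x_i\},\{y_i\},\{z_i\}$. $G_1=[H\ast_{\langle d_i=x_iy_i^{-1}\rangle}(F_x\times F_y\times F_z)]\times\langle s_1\rangle$; $G_2=\langle G_1,s_2\mid s_2^{-1}(x_iz_i)s_2=y_iz_i,\ 1\le i\le p\rangle$; $G_l=\langle G_{l-1},s_l\mid s_l^{-1}s_1s_l=s_{l-1}\rangle$ for $l\ge3$. *)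

(* Defs.v *)
(* Groups given by presentations, encoded as words over a
   generator type modulo the congruence generated by the relations. *)
From mathcomp Require Import all_boot all_order all_algebra.
Set Implicit Arguments. Unset Strict Implicit. Unset Printing Implicit Defensive.
Import GRing.Theory Num.Theory.

(* A letter is a generator together with a flag: false = x, true = x^{-1}. *)
Definition word (X : Type) := seq (X * bool).

(* The congruence on words generated by free cancellation and the relations
   R: two words are equal in the group <X | R> iff they are related. *)
Inductive peq (X : Type) (R : word X -> word X -> Prop) : word X -> word X -> Prop :=
| peq_refl w : peq R w w
| peq_sym u v : peq R u v -> peq R v u
| peq_trans u v w : peq R u v -> peq R v w -> peq R u w
| peq_cat u u' v v' : peq R u u' -> peq R v v' -> peq R (u ++ v) (u' ++ v')
| peq_inv x b : peq R [:: (x, b); (x, ~~ b)] [::]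
| peq_rel u v : R u v -> peq R u v.

Definition wmap (X Y : Type) (f : X -> Y) (w : word X) : word Y :=
  map (fun a => (f a.1, a.2)) w.

Fixpoint reduced (X : eqType) (w : word X) : bool :=
  match w with
  | a :: ((b :: _) as w') => ~~ ((a.1 == b.1) && (a.2 == ~~ b.2)) && reduced w'
  | _ => true
  end.

Definition Hrel (T : finType) (RH : seq (word T * word T)) (u v : word T) : Prop :=
  (u, v) \in RH.

(* {d_1,...,d_p} is a free basis of the subgroup F of H it generates:
   no nonempty freely reduced word in the d_i is trivial in H. *)
Definition free_basis (T : finType) (RH : seq (word T * word T)) (p : nat)
  (d : 'I_p -> T) : Prop :=
  forall w : word 'I_p, reduced w -> w <> [::] ->
    ~ peq (Hrel RH) (wmap d w) [::].

(* Generators of G_m: those of H, x_i, y_i, z_i (i < p), and s_l, l < m.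
   gs l stands for s_{l+1} (0-based indexing). *)
Inductive gen (T : Type) (p m : nat) : Type :=
| gH of T
| gx of 'I_p
| gy of 'I_p
| gz of 'I_p
| gs of 'I_m.

Section Gm.
Variables (T : finType) (RH : seq (word T * word T)) (p : nat) (d : 'I_p -> T) (m : nat).
Local Notation G := (gen T p m).
Definition lt (g : G) : word G := [:: (g, false)].
Definition lti (g : G) : word G := [:: (g, true)].

(* is g a generator of H *_{d_i = x_i y_i^{-1}} (F_x x F_y x F_z) ? *)
Definition amalg_gen (g : G) : bool :=
  match g with gs _ => false | _ => true end.

Inductive Grel : word G -> word G -> Prop :=
| GrH u v : (u, v) \in RH -> Grel (wmap (@gH T p m) u) (wmap (@gH T p m) v)
| Gamalg i : Grel (lt (gH p m (d i))) (lt (gx T m i) ++ lti (gy T m i))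
(* F_x x F_y x F_z : generators of different factors commute *)
| Gxy i j : Grel (lt (gx T m i) ++ lt (gy T m j)) (lt (gy T m j) ++ lt (gx T m i))
| Gxz i j : Grel (lt (gx T m i) ++ lt (gz T m j)) (lt (gz T m j) ++ lt (gx T m i))
| Gyz i j : Grel (lt (gy T m i) ++ lt (gz T m j)) (lt (gz T m j) ++ lt (gy T m i))
(* G_1 = [...] x <s_1> : s_1 commutes with the amalgam's generators *)
| Gs1 (o : 'I_m) (g : G) : val o = 0 -> amalg_gen g ->
    Grel (lt (gs T p o) ++ lt g) (lt g ++ lt (gs T p o))
| Gs2 (l : 'I_m) i : val l = 1 ->
    Grel (lti (gs T p l) ++ lt (gx T m i) ++ lt (gz T m i) ++ lt (gs T p l))
         (lt (gy T m i) ++ lt (gz T m i))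
| Gsl (l l' o : 'I_m) : 2 <= val l -> val l' = (val l).-1 -> val o = 0 ->
    Grel (lti (gs T p l) ++ lt (gs T p o) ++ lt (gs T p l)) (lt (gs T p l')).

Definition Geq (u v : word G) : Prop := peq Grel u v.

Definition spow (l : 'I_m) (n : int) : word G :=
  match n with
  | Posz k => nseq k (gs T p l, false)
  | Negz k => nseq k.+1 (gs T p l, true)
  end.
End Gm.

(* Main.v *)
Require Import Defs.
From mathcomp Require Import all_boot all_order all_algebra.
From mathcomp Require Import ring zify.
Import GRing.Theory Num.Theory.
Set Implicit Arguments. Unset Strict Implicit. Unset Printing Implicit Defensive.
Local Open Scope ring_scope.

Definition amul (R : comUnitRingType) (x y : R * R) : R * R :=
  (x.1 * y.1, y.1 * x.2 + y.2).
Definition ainv (R : comUnitRingType) (x : R * R) : R * R :=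
  (x.1^-1, - (x.1^-1 * x.2)).
Arguments amul : simpl never.
Arguments ainv : simpl never.

Definition phig (R : comUnitRingType) (ell : R) (T : Type) (p m : nat)
  (g : gen T p m) : R * R :=
  match g with
  | gs l => if val l == 0%N then (1 + ell, 0)
            else ((if val l == m.-1 then 1 else 1 + ell), (- ell) ^+ (m.-1 - val l))
  | _ => (1, 0)
  end.

Arguments phig : simpl never.

Definition phil (R : comUnitRingType) (ell : R) (T : Type) (p m : nat)
  (a : gen T p m * bool) : R * R :=
  if a.2 then ainv (phig ell a.1) else phig ell a.1.

Definition Phi (R : comUnitRingType) (ell : R) (T : Type) (p m : nat)
  (w : word (gen T p m)) : R * R :=
  foldr (fun a acc => amul (phil ell a) acc) (1, 0) w.

Lemma amulA (R : comUnitRingType) (x y z : R * R) :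
  amul x (amul y z) = amul (amul x y) z.
Proof. rewrite /amul /=; congr pair; ring. Qed.

Lemma amul1l (R : comUnitRingType) (x : R * R) : amul (1, 0) x = x.
Proof. case: x => a b; rewrite /amul /=; congr pair; ring. Qed.

Lemma amul1r (R : comUnitRingType) (x : R * R) : amul x (1, 0) = x.
Proof. case: x => a b; rewrite /amul /=; congr pair; ring. Qed.

Lemma amulV (R : comUnitRingType) (x : R * R) : x.1 \is a GRing.unit ->
  amul x (ainv x) = (1, 0).
Proof. case: x => a b /= ha; rewrite /amul /ainv /= mulrV //; congr pair; ring. Qed.

Lemma amulVl (R : comUnitRingType) (x : R * R) : x.1 \is a GRing.unit ->
  amul (ainv x) x = (1, 0).
Proof.
case: x => a b /= ha; rewrite /amul /ainv /= mulVr //; congr pair.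
by rewrite mulrN mulrA mulrV // mul1r addNr.
Qed.

Lemma ainv1 (R : comUnitRingType) : ainv (1, 0) = (1, 0) :> R * R.
Proof. by rewrite /ainv /= invr1 mulr0 oppr0. Qed.

Lemma Phi_cat (R : comUnitRingType) (ell : R) (T : Type) (p m : nat)
  (u v : word (gen T p m)) : Phi ell (u ++ v) = amul (Phi ell u) (Phi ell v).
Proof.
elim: u => [|a u IH] /=; first by rewrite amul1l.
by rewrite IH amulA.
Qed.

Definition is_gs (T : Type) (p m : nat) (g : gen T p m) : bool :=
  if g is gs _ then true else false.

Lemma Phi_triv (R : comUnitRingType) (ell : R) (T : Type) (p m : nat)
  (w : word (gen T p m)) : all (fun a => ~~ is_gs a.1) w -> Phi ell w = (1, 0).
Proof.
elim: w => [|[g b] w IH] //= /andP [hg hw].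
rewrite IH // amul1r /phil /=.
have -> : phig ell g = (1, 0) by case: g hg.
by case: b => //; rewrite ainv1.
Qed.

Lemma phig_unit (R : comUnitRingType) (ell : R) (T : Type) (p m : nat)
  (g : gen T p m) : (1 + ell) \is a GRing.unit -> (phig ell g).1 \is a GRing.unit.
Proof.
move=> hu; case: g => [t|i|i|i|l]; rewrite /phig /= ?unitr1 //.
by case: ifP => //= _; case: ifP => //= _; rewrite unitr1.
Qed.

Lemma conjA (R : comUnitRingType) (ell : R) (x : R * R) : x.1 \is a GRing.unit ->
  amul (ainv x) (amul (1 + ell, 0) x) = (1 + ell, - ell * x.2).
Proof.
case: x => a b /= ha; rewrite /amul /ainv /=; congr pair.
  by rewrite mulrC -mulrA mulrV ?mulr1.
rewrite mulr0 add0r mulrN mulrA -(mulrA (1 + ell)) mulrV // mulr1.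
ring.
Qed.

Lemma Phi_Geq (R : comUnitRingType) (ell : R) (hu : (1 + ell) \is a GRing.unit)
  (T : finType) RH p d m (u v : word (gen T p m)) :
  Geq RH d u v -> Phi ell u = Phi ell v.
Proof.
elim => {u v}.
- by [].
- by move=> u v _ ->.
- by move=> u v w _ -> _ ->.
- by move=> u u' v v' _ e1 _ e2; rewrite !Phi_cat e1 e2.
- move=> x b; rewrite /Phi /= amul1r /phil /=.
  have hx := @phig_unit _ ell _ _ _ x hu.
  by case: b => /=; [rewrite amulVl | rewrite amulV].
- move=> u v [].
  + move=> u0 v0 _; rewrite !Phi_triv //.
      by elim: v0.
    by elim: u0.
  + by move=> i; rewrite !Phi_triv.
  + by move=> i j; rewrite !Phi_triv.
  + by move=> i j; rewrite !Phi_triv.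
  + by move=> i j; rewrite !Phi_triv.
  + move=> o g ho hg; rewrite /Phi /= /phil /=.
    have -> : phig ell g = (1, 0) by case: g hg.
    by rewrite !amul1r amul1l.
  + move=> l i hl; rewrite /Phi /= /phil /= !amul1r !amul1l amulVl //.
    exact: (@phig_unit _ ell _ _ _ (gs T p l) hu).
  + move=> l l' o hl hl' ho; rewrite /Phi /= /phil /= !amul1r.
    have hl0 : (val l == 0%N) = false by apply/negbTE; lia.
    have hl'0 : (val l' == 0%N) = false by apply/negbTE; lia.
    have hlm : (val l < m)%N by exact: ltn_ord.
    have hl'm : (val l' == m.-1) = false by apply/negbTE; lia.
    have eo : phig ell (gs T p o) = (1 + ell, 0) by rewrite /phig ho.
    rewrite eo conjA; last exact: (@phig_unit _ ell _ _ _ (gs T p l) hu).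
    rewrite /phig hl0 hl'0 hl'm /=.
    have -> : (m.-1 - val l' = (m.-1 - val l).+1)%N by lia.
    by rewrite exprS.
Qed.

Definition lowlet (T : Type) (p m : nat) (k : nat) (a : gen T p m * bool) : bool :=
  if a.1 is gs l then (val l < k)%N else false.

Lemma amul2 (R : comUnitRingType) (x y : R * R) : (amul x y).2 = y.1 * x.2 + y.2.
Proof. by []. Qed.
Lemma amul1 (R : comUnitRingType) (x y : R * R) : (amul x y).1 = x.1 * y.1.
Proof. by []. Qed.

Lemma Phi_low (R : comUnitRingType) (ell : R) (T : Type) (p m k : nat)
  (w : word (gen T p m)) :
  (forall l : 'I_m, (val l < k)%N -> (phig ell (gs T p l)).2 = 0) ->
  all (lowlet k) w -> (Phi ell w).2 = 0.
Proof.
move=> hl; elim: w => [|[g b] w IH] //= /andP [hg hw].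
rewrite IH // addr0.
case: g hg => // l; rewrite /lowlet /= => hlk.
rewrite /phil /=; case: b hlk => hlk; last by rewrite hl // mulr0.
by rewrite /ainv /= hl // mulr0 oppr0 mulr0.
Qed.

Lemma Phi_nseq (R : comUnitRingType) (ell : R) (T : Type) (p m : nat)
  (a : gen T p m * bool) (n : nat) :
  (phil ell a).1 * (phil ell a).2 = (phil ell a).2 ->
  (Phi ell (nseq n a)).2 = (phil ell a).2 *+ n /\
  (Phi ell (nseq n a)).1 * (phil ell a).2 = (phil ell a).2.
Proof.
move=> h; elim: n => [|n [IH1 IH2]] /=; first by rewrite mul1r.
rewrite IH1 IH2 mulrS; split => //.
by rewrite -mulrA IH2.
Qed.

Lemma level (T : finType) RH p d m (k : 'I_m) (hk : (0 < val k)%N)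
  (u : word (gen T p m)) (c : int) (L : nat) (hL : (1 < L)%N)
  (hc : (absz c < L)%N) :
  all (lowlet (val k)) u -> Geq RH d (u ++ spow T p k c) [::] -> c = 0.
Proof.
have hkm : (val k < m)%N by exact: ltn_ord.
pose N := (L ^ (m - val k))%N.
have hN : (1 < N)%N.
  rewrite /N; have -> : (m - val k = (m - val k).-1.+1)%N by lia.
  rewrite expnS; have := expn_gt0 L (m - val k).-1; nia.
pose ell : 'Z_N := L%:R.
have hu : (1 + ell) \is a GRing.unit.
  rewrite /ell addrC natr1 unitZpE // /N coprimeXl //; exact: coprimenS.
have ellN : forall e, (m - val k <= e)%N -> ell ^+ e = 0.
  move=> e he; rewrite /ell -natrX -(subnKC he) expnD natrM.
  by rewrite (pchar_Zp hN) mul0r.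
have mellN : forall e, (m - val k <= e)%N -> (- ell) ^+ e = 0.
  by move=> e he; rewrite exprNn ellN // mulr0.
move=> hall /(Phi_Geq hu) e.
have := congr1 snd e; rewrite Phi_cat amul2 (Phi_low (k := val k)) // ?mulr0 ?add0r; last first.
  move=> l hl; rewrite /phig; case: ifP => //= _; apply: mellN; rewrite -subn1.
  have : (nat_of_ord l < nat_of_ord k)%N := hl.
  have : (nat_of_ord k < m)%N := hkm. change (\val k) with (nat_of_ord k); lia.
move=> {e}.
set dd := (m.-1 - val k)%N.
have hd : (dd.+1 = m - val k)%N by rewrite /dd -subn1; lia.
set beta := (- ell) ^+ dd.
set alpha : 'Z_N := if val k == m.-1 then 1 else 1 + ell.
have hk0 : (val k == 0%N) = false by apply/negbTE; rewrite -lt0n.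
have ephi : phig ell (gs T p k) = (alpha, beta) by rewrite /phig hk0.
have aunit : alpha \is a GRing.unit.
  by have := @phig_unit _ ell _ _ _ (gs T p k) hu; rewrite ephi.
have ellb : ell * beta = 0.
  have : (- ell) ^+ dd.+1 = 0 by apply: mellN; lia.
  by rewrite exprS mulNr => /eqP; rewrite oppr_eq0 => /eqP.
have hab : alpha * beta = beta.
  rewrite /alpha; case: ifP => _; first by rewrite mul1r.
  by rewrite mulrDl mul1r ellb addr0.
have hiab : alpha^-1 * beta = beta.
  by rewrite -{1}hab mulrA mulVr // mul1r.
have key : forall n : nat, (n < L)%N -> beta *+ n = 0 -> n = 0%N.
  move=> n hn; rewrite /beta exprNn -mulrnAr /ell -natrX -mulr_natr -natrM => /eqP.
  rewrite -signr_odd; case: (odd dd); rewrite ?expr0 ?expr1 ?mul1r ?mulN1r ?oppr_eq0 => /eqP h;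
  have := congr1 (@nat_of_ord _) h; rewrite val_Zp_nat // => /= /eqP; rewrite -/(dvdn _ _) /N -hd expnSr;
  rewrite dvdn_pmul2l ?expn_gt0 ?(ltnW hL) // => hdv;
  case: n hn hdv {h} => // n hn /(dvdn_leq (ltn0Sn n)); lia.
case: c hc => n hn; rewrite /spow.
- have hx : (phil ell (gs T p k, false)).1 * (phil ell (gs T p k, false)).2
      = (phil ell (gs T p k, false)).2 by rewrite /phil /= ephi.
  have [h1 _] := Phi_nseq n hx.
  rewrite h1 /phil /= ephi /=.
  by move=> /(key n hn) ->.
- have hx : (phil ell (gs T p k, true)).1 * (phil ell (gs T p k, true)).2
      = (phil ell (gs T p k, true)).2 by rewrite /phil /= ephi /ainv /= hiab mulrN hiab.
  have [h1 _] := Phi_nseq n.+1 hx.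
  rewrite h1 /phil /= ephi /ainv /= hiab.
  by rewrite mulNrn => /eqP; rewrite oppr_eq0 => /eqP /(key n.+1 hn).
Qed.

Lemma Phi_nseq1 (R : comUnitRingType) (ell : R) (T : Type) (p m : nat)
  (a : gen T p m * bool) (n : nat) :
  (Phi ell (nseq n a)).1 = (phil ell a).1 ^+ n.
Proof. by elim: n => [|n IH] //=; rewrite IH exprS. Qed.

Lemma first_comp (T : finType) RH p d m (i : 'I_m) (hi : (val i < m.-1)%N)
  (a : int) : Geq RH d (spow T p i a) [::] -> a = 0.
Proof.
have hu : (1 + 1 : rat) \is a GRing.unit by rewrite unitfE.
move=> /(Phi_Geq hu) /(congr1 fst).
have hi' : (val i == m.-1) = false by apply/negbTE; rewrite neq_ltn hi.
have ephi : (phig (1 : rat) (gs T p i)).1 = 2.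
  by rewrite /phig; case: ifP => _ //=; rewrite hi'.
have two : forall n : nat, (2 : rat) ^+ n = 1 -> n = 0%N.
  move=> n; rewrite -natrX => /eqP; rewrite pnatr_eq1 => /eqP.
  case: n => // n; rewrite expnS; have := expn_gt0 2 n; lia.
case: a => n; rewrite /spow Phi_nseq1 /phil /=.
- by rewrite ephi => /two ->.
- rewrite /ainv /= ephi exprVn => /eqP; rewrite invr_eq1 => /eqP /two.
  by [].
Qed.

Lemma all_spow (T : finType) (p m : nat) (l : 'I_m) (k : nat) (n : int) :
  (val l < k)%N -> all (lowlet k) (spow T p l n).
Proof. by move=> h; case: n => n; rewrite /spow all_nseq /lowlet /= ?h ?orbT. Qed.

Theorem lemma3p5 (T : finType) (RH : seq (word T * word T)) (p : nat)
  (d : 'I_p -> T) (Hfree : free_basis RH d) (m : nat) (i j k : 'I_m)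
  (hij : (i < j)%N) (hjk : (j < k)%N) (p' q r : int) :
  Geq RH d (spow T p i p' ++ spow T p j q ++ spow T p k r) [::] ->
  [/\ p' = 0, q = 0 & r = 0].
Proof.
move=> H.
have hkm : (nat_of_ord k < m)%N := ltn_ord k.
pose L := (absz p' + absz q + absz r + 2)%N.
have hL : (1 < L)%N by rewrite /L; lia.
have hr : r = 0.
  apply: (@level T RH p d m k _ (spow T p i p' ++ spow T p j q) r L hL).
  - change (0 < nat_of_ord k)%N; lia.
  - rewrite /L; lia.
  - by rewrite all_cat !all_spow //; change (nat_of_ord i < nat_of_ord k)%N; lia.
  - by rewrite -catA.
subst r.
have H' : Geq RH d (spow T p i p' ++ spow T p j q) [::].
  by move: H; rewrite [spow T p k 0]/spow /= cats0.
have hq : q = 0.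
  apply: (@level T RH p d m j _ (spow T p i p') q L hL).
  - change (0 < nat_of_ord j)%N; lia.
  - rewrite /L; lia.
  - by rewrite !all_spow.
  - exact: H'.
subst q.
have H'' : Geq RH d (spow T p i p') [::].
  by move: H'; rewrite [spow T p j 0]/spow /= cats0.
split => //.
apply: (first_comp _ H'').
change (nat_of_ord i < m.-1)%N; rewrite -subn1; lia.
Qed.
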